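(* Let $d\le 3$ be a positive integer, let $\tau_1,\dots,\tau_d$ and $n_1,\dots,n_d$ be positive integers, and consider the generic $d$-degree polynomial multiparameter eigenvalue problem $P_i(x_1,\dots,x_d)\mathbf{v}_i=0$, $1\le i\le d$, where $P_i(x_1,\dots,x_d)=\sum_{i_1=0}^{\tau_1}\cdots\sum_{i_d=0}^{\tau_d}P^{(i)}_{i_1,\dots,i_d}x_1^{i_1}\cdots x_d^{i_d}$ and the entries of all the $n_i\times n_i$ coefficient matrices $P^{(i)}_{i_1,\dots,i_d}$ (over all $i$ and all multi-indices) are distinct indeterminates. Then the hidden variable tensor Dixon resultant $R(x_d)$ of this problem is nonsingular, i.e. $\det R(x_d)$ is not the zero polynomial.
   Context: Let $N=\prod_{i=1}^d n_i$. Kronecker block determinant: for a $d\times d$ array $M=(M_{ij})$ with $M_{ij}$ of size $n_i\times n_i$, $|M|_\otimes=\sum_{\sigma\in S_d}\mathrm{sgn}(\sigma)\,M_{1,\sigma(1)}\otimes\cdots\otimes M_{d,\sigma(d)}$. Tensor Dixon function (with $x_d$ hidden): with variables $s_1,\dots,s_{d-1},t_1,\dots,t_{d-1},x_d$, let $M_{ij}=P_i(t_1,\dots,t_{j-1},s_j,\dots,s_{d-1},x_d)$ for $1\le i,j\le d$, and $f_{\text{Dixon}}=|M|_\otimes/\prod_{i=1}^{d-1}(s_i-t_i)$ (for $d=1$, $f_{\text{Dixon}}=P_1(x_1)$), a matrix polynomial of degree at most $\alpha_i=i\tau_i-1$ in $s_i$ and at most $\beta_i=(d-i)\tau_i-1$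 in $t_i$. Expand $f_{\text{Dixon}}=\sum_{\mathbf{i},\mathbf{j}}A_{\mathbf{i},\mathbf{j}}(x_d)\prod_k s_k^{i_k}\prod_k t_k^{j_k}$ over $0\le i_k\le\alpha_k$, $0\le j_k\le\beta_k$. The hidden variable tensor Dixon resultant $R(x_d)$ is the square block matrix of size $N(d-1)!\prod_{k=1}^{d-1}\tau_k$ whose block columns (width $N$) are indexed by $s$-exponents $\mathbf{i}$ and block rows by $t$-exponents $\mathbf{j}$, with block $(\mathbf{j},\mathbf{i})$ equal to $A_{\mathbf{i},\mathbf{j}}(x_d)$; its entries are polynomials in $x_d$ and the indeterminates. *)

(* Defs.v *)
From HB Require Import structures.
From mathcomp Require Import all_boot all_order all_algebra all_fingroup.
From mathcomp Require Import mpoly.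
From mathcomp Require Import zify.
Set Implicit Arguments. Unset Strict Implicit. Unset Printing Implicit Defensive.
Import GRing.Theory.
Local Open Scope ring_scope.

(* Indexing conventions: d = m.+1.  Variables x_1..x_d are indexed by
   'I_m.+1 (x_d = ord_max is the hidden variable); s_1..s_{d-1},
   t_1..t_{d-1} are indexed by 'I_m. *)
Section DixonIndex.
Variables (m : nat) (tau n : 'I_m.+1 -> nat).

Definition wk (k : 'I_m) : 'I_m.+1 := widen_ord (leqnSn m) k.

Definition expo := {dffun forall k : 'I_m.+1, 'I_(tau k).+1}.
(* row/column indices of a Kronecker product of n_1 x .. x n_d blocks *)
Definition kidx := {dffun forall i : 'I_m.+1, 'I_(n i)}.
(* s-exponents: 0 <= i_k <= alpha_k = k tau_k - 1 (k 1-indexed) *)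
Definition sexp := {dffun forall k : 'I_m, 'I_(k.+1 * tau (wk k))}.
(* t-exponents: 0 <= j_k <= beta_k = (d - k) tau_k - 1 (k 1-indexed) *)
Definition texp := {dffun forall k : 'I_m, 'I_((m - k) * tau (wk k))}.

Lemma card_dffun_prod (I : finType) (T : I -> finType) :
  #|{: {dffun forall i : I, T i}}| = (\prod_(i : I) #|T i|)%N.
Proof.
by rewrite card_dep_ffun foldrE big_image.
Qed.

Lemma card_texp_sexp : #|{: texp * kidx}| = #|{: sexp * kidx}|.
Proof.
rewrite !card_prod /texp /sexp !card_dffun_prod.
congr (_ * _)%N.
under eq_bigr do rewrite card_ord.
under [RHS]eq_bigr do rewrite card_ord.
rewrite !big_split /=; congr (_ * _)%N.
rewrite (reindex_inj rev_ord_inj) /=.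
apply: eq_bigr => k _; rewrite /=; have := ltn_ord k; lia.
Qed.

(* index set of all the indeterminates: entry (r,c) of P^{(i)}_e *)
Definition gidx := {i : 'I_m.+1 & (expo * 'I_(n i) * 'I_(n i))%type}.

Section Ring.
Variable A : comNzRingType.
Variable coef : forall (i : 'I_m.+1) (e : expo), 'M[A]_(n i).

(* ring of polynomials in s_1..s_{d-1}, t_1..t_{d-1} over A[x_d] *)
Definition Sring := {mpoly {poly A}[m + m]}.
Definition svar (k : 'I_m) : Sring := 'X_(lshift m k).
Definition tvar (k : 'I_m) : Sring := 'X_(rshift m k).
Definition xhid : Sring := ('X : {poly A})%:MP.

Definition evalP (i : 'I_m.+1) (y : 'I_m -> Sring) : 'M[Sring]_(n i) :=
  \sum_(e : expo)
     ((\prod_(k < m) y k ^+ e (wk k)) * xhid ^+ e ord_max)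
       *: map_mx (fun c : A => (c%:P : {poly A})%:MP) (coef i e).

(* M_{ij} = P_i(t_1,..,t_{j-1}, s_j,..,s_{d-1}, x_d) *)
Definition dixonM (i j : 'I_m.+1) : 'M[Sring]_(n i) :=
  evalP i (fun k => if (k < j)%N then tvar k else svar k).

(* entries of the Kronecker block determinant |M|_(x) *)
Definition kdet (a b : kidx) : Sring :=
  \sum_(s : 'S_m.+1) (-1) ^+ s * \prod_(i < m.+1) dixonM i (s i) (a i) (b i).

Definition dixon_den : Sring := \prod_(k < m) (svar k - tvar k).

(* F is the tensor Dixon function f_Dixon = |M|_(x) / prod (s_i - t_i) *)
Definition dixon_spec (F : kidx -> kidx -> Sring) : Prop :=
  forall a b, dixon_den * F a b = kdet a b.

Definition stmono (i : sexp) (j : texp) : 'X_{1.. m + m} :=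
  [multinom (match split k with inl k1 => (i k1 : nat) | inr k2 => (j k2 : nat) end)
     | k < m + m].

(* block (j,i) is A_{i,j}(x_d); rows indexed by (j, a), columns by (i, b) *)
Definition resultant_rect (F : kidx -> kidx -> Sring) :
  'M[{poly A}]_(#|{: texp * kidx}|, #|{: sexp * kidx}|) :=
  \matrix_(r, c) let: (j, a) := enum_val r in let: (i, b) := enum_val c in
                 (F a b)@_(stmono i j).

Definition dixon_resultant (F : kidx -> kidx -> Sring) :
  'M[{poly A}]_(#|{: sexp * kidx}|) :=
  castmx (card_texp_sexp, erefl) (resultant_rect F).
End Ring.

(* the generic problem: entries of all coefficient matrices are distinct
   indeterminates of the polynomial ring K[gidx] *)
Definition gencoef (K : fieldType) (i : 'I_m.+1) (e : expo) :
  'M[{mpoly K[#|{: gidx}|]}]_(n i) :=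
  \matrix_(r, c) 'X_(enum_rank (existT _ i (e, r, c) : gidx)).

End DixonIndex.

(* Main.v *)
Require Import Defs.
From HB Require Import structures.
From mathcomp Require Import all_boot all_order all_algebra all_fingroup.
From mathcomp Require Import mpoly.
From mathcomp Require Import zify ring.
Set Implicit Arguments. Unset Strict Implicit. Unset Printing Implicit Defensive.
Import GRing.Theory.
Local Open Scope ring_scope.
Lemma det2 (R : comNzRingType) (A : 'M[R]_2) :
  \det A = A 0 0 * A 1 1 - A 0 1 * A 1 0.
Proof.
have -> : A = \matrix_(i, j) A (inord i) (inord j).
  by apply/matrixP => i j; rewrite mxE !inord_val.
rewrite (expand_det_row _ 0) !big_ord_recr big_ord0 /= add0r.
rewrite /cofactor !det_mx11 !mxE /= expr0 expr1; ring.
Qed.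
Lemma det3 (R : comNzRingType) (A : 'M[R]_3) :
  \det A = A 0 0 * (A 1 1 * A 2 2 - A 1 2 * A 2 1)
         - A 0 1 * (A 1 0 * A 2 2 - A 1 2 * A 2 0)
         + A 0 2 * (A 1 0 * A 2 1 - A 1 1 * A 2 0).
Proof.
have -> : A = \matrix_(i, j) A (inord i) (inord j).
  by apply/matrixP => i j; rewrite mxE !inord_val.
rewrite (expand_det_row _ 0) !big_ord_recr big_ord0 /= add0r.
rewrite /cofactor !det2 !mxE /= expr0 expr1 expr2; ring.
Qed.

Definition dd (R : comNzRingType) (x y : R) (k : nat) :=
  \sum_(l < k) x ^+ (k.-1 - l) * y ^+ l.

Lemma ddE (R : comNzRingType) (x y : R) k : x ^+ k - y ^+ k = (x - y) * dd x y k.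
Proof. exact: subrXX. Qed.

Section Gen.
Variables (m : nat) (tau n : 'I_m.+1 -> nat) (A : comNzRingType).
Variable coef : forall (i : 'I_m.+1) (e : expo tau), 'M[A]_(n i).

Lemma kdetE a b : kdet coef a b = \det (\matrix_(i, j) dixonM coef i j (a i) (b i)).
Proof.
rewrite /kdet /determinant; apply: eq_bigr => s _; congr (_ * _).
by apply: eq_bigr => i _; rewrite mxE.
Qed.

Definition evalQ (i : 'I_m.+1) (y y' : 'I_m -> Sring m A) (k : 'I_m) : 'M[Sring m A]_(n i) :=
  \sum_(e : expo tau)
     ((\prod_(l < m | l != k) y l ^+ e (wk l)) * dd (y k) (y' k) (e (wk k))
        * xhid m A ^+ e ord_max)
       *: map_mx (fun c : A => (c%:P : {poly A})%:MP) (coef i e).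

Lemma evalP_diff i (y y' : 'I_m -> Sring m A) k :
  (forall l, l != k -> y l = y' l) ->
  evalP coef i y - evalP coef i y' = (y k - y' k) *: evalQ i y y' k.
Proof.
move=> Hy; rewrite /evalP /evalQ -sumrB scaler_sumr; apply: eq_bigr => e _.
rewrite -scalerBl scalerA; congr (_ *: _).
rewrite [\prod_(l < m) y l ^+ _](bigD1 k) // [\prod_(l < m) y' l ^+ _](bigD1 k) //=.
rewrite [\prod_(l < m | l != k) y' l ^+ _](eq_bigr (fun l => y l ^+ e (wk l))); last by move=> l /Hy ->.
set P := \prod_(l < m | l != k) _.
transitivity ((y k ^+ e (wk k) - y' k ^+ e (wk k)) * P * xhid m A ^+ e ord_max); first by ring.
rewrite ddE; ring.
Qed.

Definition ycol (j : 'I_m.+1) : 'I_m -> Sring m A :=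
  fun k => if (k < j)%N then tvar A k else svar A k.

Lemma dixonM_diff i (j j' : 'I_m.+1) (k : 'I_m) a b :
  (forall l : 'I_m, l != k -> ycol j l = ycol j' l) ->
  dixonM coef i j a b =
   (ycol j k - ycol j' k) * evalQ i (ycol j) (ycol j') k a b
   + dixonM coef i j' a b.
Proof.
move=> H; have := evalP_diff i H; move/matrixP => /(_ a b).
rewrite !mxE => <-; rewrite /dixonM /ycol; ring.
Qed.
End Gen.

Lemma det2_cols (R : comNzRingType) (d0 : R) (E D : 'M[R]_2) :
  (forall i, D i 0 = d0 * E i 0 + D i 1) ->
  (forall i, D i 1 = E i 1) -> \det D = d0 * \det E.
Proof. by move=> H0 H1; rewrite !det2 !H0 !H1; ring. Qed.

Section M1.
Variables (tau n : 'I_2 -> nat) (A : comNzRingType).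
Variable coef : forall (i : 'I_2) (e : expo tau), 'M[A]_(n i).

Definition F1 (a b : kidx n) : Sring 1 A :=
  \det (\matrix_(i, j) (if j == 0 then evalQ coef i (ycol A 0) (ycol A 1) 0 (a i) (b i)
                        else dixonM coef i 1 (a i) (b i))).

Lemma spec1 : dixon_spec coef F1.
Proof.
move=> a b; rewrite kdetE /F1 /dixon_den big_ord1.
have C0 : forall l : 'I_1, l != 0 -> ycol A (0 : 'I_2) l = ycol A (1 : 'I_2) l.
  by move=> l; rewrite ord1 eqxx.
symmetry; apply: det2_cols => i; rewrite !mxE /= //.
by rewrite (dixonM_diff _ _ _ C0).
Qed.
End M1.

Lemma det3_cols (R : comNzRingType) (d0 d1 : R) (E D : 'M[R]_3) :
  (forall i, D i 0 = d0 * E i 0 + D i 1) ->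
  (forall i, D i 1 = d1 * E i 1 + D i 2) ->
  (forall i, D i 2 = E i 2) -> \det D = d0 * d1 * \det E.
Proof. by move=> H0 H1 H2; rewrite !det3 !H0 !H1 !H2; ring. Qed.

Section M2.
Variables (tau n : 'I_3 -> nat) (A : comNzRingType).
Variable coef : forall (i : 'I_3) (e : expo tau), 'M[A]_(n i).

Definition F2 (a b : kidx n) : Sring 2 A :=
  \det (\matrix_(i, j)
    (if j == 0 then evalQ coef i (ycol A 0) (ycol A 1) 0 (a i) (b i)
     else if j == 1 then evalQ coef i (ycol A 1) (ycol A 2) 1 (a i) (b i)
     else dixonM coef i 2 (a i) (b i))).

Lemma spec2 : dixon_spec coef F2.
Proof.
move=> a b; rewrite kdetE /F2 /dixon_den !big_ord_recr big_ord0 /= mul1r.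
have C0 : forall l : 'I_2, l != 0 -> ycol A (0 : 'I_3) l = ycol A (1 : 'I_3) l.
  by move=> l; rewrite /ycol; case: l => [[|[|l]] Hl] //=.
have C1 : forall l : 'I_2, l != 1 -> ycol A (1 : 'I_3) l = ycol A (2 : 'I_3) l.
  by move=> l; rewrite /ycol; case: l => [[|[|l]] Hl] //=.
have -> : (ord_max : 'I_2) = 1 by apply: val_inj.
have -> : (widen_ord (leqnSn 1) ord_max : 'I_2) = 0 by apply: val_inj.
symmetry; apply: det3_cols => i; rewrite !mxE /= //.
- by rewrite (dixonM_diff _ _ _ C0).
- by rewrite (dixonM_diff _ _ _ C1).
Qed.
End M2.
Lemma sperm_det (K : fieldType) (T S : finType) (eqTS : #|T| = #|S|) (f : T -> S -> K) :
  (forall c, \sum_t f t c ^+ 2 = 1) ->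
  (forall t c c', c != c' -> f t c * f t c' = 0) ->
  \det (castmx (eqTS, erefl) (\matrix_(r, c) f (enum_val r) (enum_val c)) : 'M_#|S|) != 0.
Proof.
move=> H1 H2.
set M := castmx _ _.
have MM : M^T *m M = 1%:M.
  apply/matrixP => c c'; rewrite !mxE.
  rewrite (reindex (fun t => cast_ord eqTS (enum_rank t))) /=; last first.
    exists (fun r => enum_val (cast_ord (esym eqTS) r)) => x _.
      by rewrite cast_ordK enum_rankK.
    by rewrite enum_valK cast_ordKV.
  under eq_bigr => t _ do rewrite !mxE !castmxE /= !mxE cast_ordK enum_rankK.
  rewrite !cast_ord_id.
  have [<-|ne] := eqVneq c c'.
    by rewrite -(H1 (enum_val c)); apply: eq_bigr => t _; rewrite expr2.
  rewrite big1 // => t _; apply: H2.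
  by apply: contra ne => /eqP /enum_val_inj ->.
have H : \det M * \det M = 1 by rewrite -{1}det_tr -det_mulmx MM det1.
apply/negP => /eqP h0; move: H; rewrite h0 mul0r => /eqP; by rewrite eq_sym oner_eq0.
Qed.
Lemma det_rowscale (R : comNzRingType) k (c : 'I_k -> R) (P : 'M[R]_k) :
  \det (\matrix_(i, j) (c i * P i j)) = (\prod_i c i) * \det P.
Proof.
rewrite /determinant mulr_sumr; apply: eq_bigr => s _.
under eq_bigr => i _ do rewrite mxE.
by rewrite big_split /= mulrCA.
Qed.

Lemma prod_eqR (R : comNzRingType) k (T : 'I_k -> finType) (a b : {dffun forall i, T i}) :
  \prod_i ((a i == b i)%:R : R) = (a == b)%:R.
Proof.
have [->|ne] := eqVneq a b.
  by rewrite big1 // => i _; rewrite eqxx.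
have [i Hi] : exists i, a i != b i.
  apply/existsP; apply: contraR ne => /existsPn H; apply/eqP/ffunP => i.
  by have := H i; rewrite negbK => /eqP.
by rewrite (bigD1 i) //= (negPf Hi) mul0r.
Qed.

Section Spec.
Variables (K : fieldType) (m : nat) (tau n : 'I_m.+1 -> nat).
Variable w : 'I_m.+1 -> expo tau -> K.
Local Notation GA := {mpoly K[#|{: gidx tau n}|]}.

Definition valf (g : gidx tau n) : K :=
  let: existT i (e, r, c) := g in (r == c)%:R * w i e.
Definition vv (x : 'I_#|{: gidx tau n}|) : K := valf (enum_val x).
Definition phiR : {rmorphism {poly GA} -> K} := meval vv \o horner_eval 0.
Definition psi : {rmorphism Sring m GA -> {mpoly K[m + m]}} := map_mpoly phiR.

Lemma psi_svar k : psi (svar GA k) = 'X_(lshift m k).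
Proof. exact: map_mpolyX. Qed.
Lemma psi_tvar k : psi (tvar GA k) = 'X_(rshift m k).
Proof. exact: map_mpolyX. Qed.
Lemma psi_xhid : psi (xhid m GA) = 0.
Proof. by rewrite /psi /= map_mpolyC /= horner_evalE hornerX meval0 mpolyC0. Qed.
Lemma psiC (c : GA) : psi ((c%:P)%:MP) = (c.@[vv])%:MP.
Proof. by rewrite /psi /= map_mpolyC /= horner_evalE hornerC. Qed.
Lemma meval_gencoef i e r c : (gencoef n K i e r c).@[vv] = (r == c)%:R * w i e.
Proof. by rewrite mxE mevalXU /vv enum_rankK. Qed.

Definition pK (i : 'I_m.+1) (y : 'I_m -> {mpoly K[m + m]}) : {mpoly K[m + m]} :=
  \sum_(e : expo tau) (\prod_(k < m) y k ^+ e (wk k)) * 0 ^+ e ord_max * (w i e)%:MP.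

Lemma eq_pK i y y' : y =1 y' -> pK i y = pK i y'.
Proof. by move=> H; apply: eq_bigr => e _; congr (_ * _ * _); apply: eq_bigr => k _; rewrite H. Qed.

Lemma psi_evalP i y r c :
  psi ((evalP (gencoef n K) i y) r c) = (r == c)%:R * pK i (fun k => psi (y k)).
Proof.
rewrite /evalP summxE rmorph_sum mulr_sumr; apply: eq_bigr => e _.
rewrite !mxE rmorphM rmorphM rmorph_prod rmorphXn psi_xhid psiC mevalXU /vv enum_rankK /=.
under eq_bigr => k _ do rewrite rmorphXn.
rewrite mpolyCM mpolyC_nat; ring.
Qed.

Definition ycolK (j : 'I_m.+1) : 'I_m -> {mpoly K[m + m]} :=
  fun k => if (k < j)%N then 'X_(rshift m k) else 'X_(lshift m k).

Lemma psi_kdet a b :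
  psi (kdet (gencoef n K) a b) = (a == b)%:R * \det (\matrix_(i, j) pK i (ycolK j)).
Proof.
rewrite kdetE -det_map_mx -prod_eqR -det_rowscale; congr (\det _).
apply/matrixP => i j; rewrite !mxE psi_evalP; congr (_ * _); apply: eq_pK.
move=> k; rewrite /ycolK; case: ifP => _; [exact: psi_tvar | exact: psi_svar].
Qed.

Definition denK : {mpoly K[m + m]} := \prod_(k < m) ('X_(lshift m k) - 'X_(rshift m k)).

Lemma psi_den : psi (dixon_den m GA) = denK.
Proof.
rewrite /dixon_den rmorph_prod; apply: eq_bigr => k _.
by rewrite rmorphB psi_svar psi_tvar.
Qed.

Lemma psi_F (delta : {mpoly K[m + m]}) F :
  denK != 0 -> denK * delta = \det (\matrix_(i, j) pK i (ycolK j)) ->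
  dixon_spec (gencoef n K) F -> forall a b, psi (F a b) = (a == b)%:R * delta.
Proof.
move=> nz Hd HF a b; apply: (mulfI nz).
by rewrite -psi_den -rmorphM HF psi_kdet -Hd psi_den mulrCA.
Qed.

Lemma final_det (delta : {mpoly K[m + m]}) F :
  denK != 0 -> denK * delta = \det (\matrix_(i, j) pK i (ycolK j)) ->
  dixon_spec (@gencoef m tau n K) F ->
  (forall i : sexp tau, \sum_(j : texp tau) (delta@_(stmono i j)) ^+ 2 = 1) ->
  (forall (i i' : sexp tau) (j : texp tau), i != i' -> delta@_(stmono i j) * delta@_(stmono i' j) = 0) ->
  \det (dixon_resultant tau F) != 0.
Proof.
move=> nz Hd HF H1 H2.
have HpF := psi_F nz Hd HF.
set f := fun (t : texp tau * kidx n) (s : sexp tau * kidx n) =>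
  let: (j, a) := t in let: (i, b) := s in (a == b)%:R * delta@_(stmono i j).
have := @sperm_det K _ _ (card_texp_sexp tau n) f.
have E : map_mx phiR (dixon_resultant tau F) =
   castmx (card_texp_sexp tau n, erefl) (\matrix_(r, c) f (enum_val r) (enum_val c)).
  rewrite /dixon_resultant map_castmx; congr castmx.
  apply/matrixP => r c; rewrite !mxE /f.
  case: (enum_val r) => j a; case: (enum_val c) => i b.
  by rewrite -mcoeff_map_mpoly -/psi HpF -mpolyC_nat mcoeffCM.
move=> H.
have Hd0 : \det (map_mx phiR (dixon_resultant tau F)) != 0.
  rewrite E; apply: H.
    case=> i b; rewrite -(H1 i).
    transitivity (\sum_(j : texp tau) \sum_(a : kidx n) f (j, a) (i, b) ^+ 2).
      by rewrite pair_bigA; apply: eq_bigr => -[j a].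
    apply: eq_bigr => j _; rewrite /f (bigD1 b) //= eqxx mul1r big1 ?addr0 // => a /negPf ->.
    by rewrite mul0r expr0n.
  case=> j a [i b] [i' b'] ne /=.
  have [eb|nb] := eqVneq a b; last by rewrite mulr0n !mul0r.
  have [eb'|nb'] := eqVneq a b'; last by rewrite mulr0n !mul0r mulr0.
  rewrite !mul1r; apply: H2; apply: contra ne => /eqP ->.
  by rewrite -eb -eb'.
rewrite det_map_mx in Hd0; apply: contra_neq Hd0 => ->; exact: rmorph0.
Qed.
End Spec.
Definition mnmS m (fs ft : 'I_m -> nat) : 'X_{1..m + m} :=
  [multinom (match split k with inl k1 => fs k1 | inr k2 => ft k2 end) | k < m + m].

Lemma stmonoE m (tau : 'I_m.+1 -> nat) (i : sexp tau) (j : texp tau) :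
  stmono i j = mnmS (fun k => i k) (fun k => j k).
Proof. by []. Qed.

Lemma mnmS_l m fs ft (k : 'I_m) : mnmS fs ft (lshift m k) = fs k.
Proof. by rewrite mnmE (unsplitK (inl k)). Qed.
Lemma mnmS_r m fs ft (k : 'I_m) : mnmS fs ft (rshift m k) = ft k.
Proof. by rewrite mnmE (unsplitK (inr k)). Qed.

Lemma mpolyX_mnmS (R : comNzRingType) m fs ft :
  'X_[mnmS fs ft] = (\prod_(k < m) 'X_(lshift m k) ^+ fs k) * \prod_(k < m) 'X_(rshift m k) ^+ ft k
    :> {mpoly R[m + m]}.
Proof.
rewrite mpolyXE_id big_split_ord /=; congr (_ * _); apply: eq_bigr => k _.
  by rewrite mnmS_l. by rewrite mnmS_r.
Qed.

Lemma mnmS_eq m fs ft fs' ft' :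
  (mnmS fs ft == mnmS fs' ft' :> 'X_{1..m + m}) = [forall k, fs k == fs' k] && [forall k, ft k == ft' k].
Proof.
apply/eqP/idP => [E|/andP[/forallP H1 /forallP H2]].
  apply/andP; split; apply/forallP => k; apply/eqP.
    by rewrite -(mnmS_l fs ft) -(mnmS_l fs' ft') E.
  by rewrite -(mnmS_r fs ft) -(mnmS_r fs' ft') E.
apply/mnmP => k; rewrite !mnmE; case: (split k) => k'.
  exact/eqP/H1. exact/eqP/H2.
Qed.

Lemma sum_ind_uniq (R : nzRingType) (I : finType) (P : pred I) :
  (forall x y, P x -> P y -> x = y) -> \sum_x ((P x)%:R : R) = [exists x, P x]%:R.
Proof.
move=> U; case: existsP => [[x Px]|nP].
  rewrite (bigD1 x) //= Px big1 ?addr0 // => y ny.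
  by case: (boolP (P y)) => // Py; move: ny; rewrite (U _ _ Py Px) eqxx.
by rewrite big1 // => x _; case: (boolP (P x)) => // Px; case: nP; exists x.
Qed.

Lemma forall_I1 (P : pred 'I_1) : [forall k, P k] = P 0.
Proof. apply/forallP/idP => [|H k]; first by apply. by rewrite ord1. Qed.

Lemma forall_I2 (P : pred 'I_2) : [forall k, P k] = P 0 && P 1.
Proof.
apply/forallP/idP => [H|/andP[H0 H1] k]; first by apply/andP; split; apply: H.
by case: k => [[|[|k]] Hk] //; [rewrite (_ : Ordinal Hk = 0) // | rewrite (_ : Ordinal Hk = 1) //]; apply: val_inj.
Qed.

Definition expoOf m (tau : 'I_m.+1 -> nat) (g : 'I_m.+1 -> nat) : expo tau := [ffun k => inord (g k)].
Lemma expoOfE m tau g k : (g k <= tau k)%N -> (@expoOf m tau g k : nat) = g k.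
Proof. by move=> H; rewrite ffunE inordK. Qed.

Lemma pK_tg (K : fieldType) m (tau : 'I_m.+1 -> nat) (tg : 'I_m.+1 -> seq (expo tau)) i y :
  pK (fun i e => \sum_(t <- tg i) ((e == t)%:R : K)) i y =
  \sum_(t <- tg i) (\prod_(k < m) y k ^+ t (wk k)) * 0 ^+ t ord_max.
Proof.
rewrite /pK.
under eq_bigr => e _ do rewrite raddf_sum mulr_sumr.
rewrite exchange_big /=; apply: eq_bigr => t _.
rewrite (bigD1 t) //= eqxx [\sum_(i0 | i0 != t) _]big1 ?addr0.
  by rewrite mpolyC1 mulr1.
by move=> e ne; rewrite (negPf ne) mpolyC0 mulr0.
Qed.


Section C0.
Variables (K : fieldType) (tau n : 'I_1 -> nat).

Definition tg0 (i : 'I_1) : seq (expo tau) := [:: expoOf tau (fun _ => 0%N)].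
Definition w0 (i : 'I_1) (e : expo tau) : K := \sum_(t <- tg0 i) (e == t)%:R.

Definition F0 (a b : kidx n) : Sring 0 {mpoly K[#|{: gidx tau n}|]} := kdet (gencoef n K) a b.

Lemma spec0 : dixon_spec (gencoef n K) F0.
Proof. by move=> a b; rewrite /dixon_den big_ord0 mul1r. Qed.

Lemma denK0 : denK K 0 = 1.
Proof. by rewrite /denK big_ord0. Qed.

Lemma denK0_neq0 : denK K 0 != 0.
Proof. by rewrite denK0 oner_eq0. Qed.

Lemma Hd0 : denK K 0 * 1 = \det (\matrix_(i, j) pK w0 i (ycolK K j)).
Proof.
rewrite denK0 mulr1 det_mx11 mxE /w0 pK_tg /tg0 big_cons big_nil addr0 big_ord0.
by rewrite expoOfE // expr0 mulr1.
Qed.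

Lemma coef0 (i : sexp tau) (j : texp tau) : (1 : {mpoly K[0 + 0]})@_(stmono i j) = 1.
Proof.
rewrite mcoeff1; suff -> : stmono i j = 0%MM by rewrite eqxx.
by apply/mnmP => -[k Hk].
Qed.

Lemma H1_0 (i : sexp tau) : \sum_(j : texp tau) ((1 : {mpoly K[0 + 0]})@_(stmono i j)) ^+ 2 = 1.
Proof.
under eq_bigr => j _ do rewrite coef0 expr1n.
rewrite sumr_const.
suff -> : #|{: texp tau}| = 1%N by [].
by rewrite /texp card_dffun_prod big_ord0.
Qed.

Lemma H2_0 (i i' : sexp tau) (j : texp tau) : i != i' ->
  (1 : {mpoly K[0 + 0]})@_(stmono i j) * (1 : {mpoly K[0 + 0]})@_(stmono i' j) = 0.
Proof. by move/eqP => ne; exfalso; apply: ne; apply/ffunP => -[k Hk]. Qed.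
End C0.


Lemma XsubX_neq0 (K : fieldType) N (i j : 'I_N) : i != j -> 'X_i - 'X_j != 0 :> {mpoly K[N]}.
Proof.
move=> ne; apply/eqP => h; have := congr1 (mcoeff U_(i)) h.
rewrite mcoeffB !mcoeffX eqxx mcoeff0.
case E: (U_(j) == U_(i))%MM.
  by move/eqP/mnmP: E => /(_ i); rewrite !mnm1E eqxx eq_sym (negPf ne).
by rewrite subr0 => /eqP; rewrite oner_eq0.
Qed.

Section C1.
Variables (K : fieldType) (tau n : 'I_2 -> nat).

Definition g10 : 'I_2 -> nat := fun k => if k == 0 then tau k else 0.
Definition tg1 (i : 'I_2) : seq (expo tau) :=
  if i == 0 then [:: expoOf tau g10] else [:: expoOf tau (fun _ => 0%N)].
Definition w1 (i : 'I_2) (e : expo tau) : K := \sum_(t <- tg1 i) (e == t)%:R.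

Local Notation s := ('X_(lshift 1 0) : {mpoly K[1 + 1]}).
Local Notation t := ('X_(rshift 1 0) : {mpoly K[1 + 1]}).

Lemma g10_le k : (g10 k <= tau k)%N.
Proof. by rewrite /g10; case: ifP. Qed.

Lemma det1m : \det (\matrix_(i, j) pK w1 i (ycolK K j)) = s ^+ tau 0 - t ^+ tau 0.
Proof.
rewrite det2 !mxE /w1 !pK_tg /tg1 /= !big_cons !big_nil !addr0 !big_ord1.
rewrite !expoOfE ?g10_le // /g10 /= /ycolK /=.
have -> : wk (0 : 'I_1) = 0 by apply: val_inj.
by rewrite /= !expr0 !mulr1.
Qed.

Lemma denK1 : denK K 1 = s - t.
Proof. by rewrite /denK big_ord1. Qed.

Lemma denK1_neq0 : denK K 1 != 0.
Proof. by rewrite denK1 XsubX_neq0 // eq_lrshift. Qed.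

Definition delta1 := dd s t (tau 0).

Lemma Hd1 : denK K 1 * delta1 = \det (\matrix_(i, j) pK w1 i (ycolK K j)).
Proof. by rewrite det1m denK1 /delta1 -ddE. Qed.

Lemma W0 : wk (0 : 'I_1) = 0. Proof. exact: val_inj. Qed.

Lemma tW : tau (wk 0) = tau 0. Proof. by rewrite W0. Qed.

Lemma i0_lt (i : sexp tau) : (i 0%R < tau 0%R)%N.
Proof. have := ltn_ord (i 0); move: (nat_of_ord (i 0)) => x; by rewrite mul1n tW. Qed.
Lemma j0_lt (j : texp tau) : (j 0%R < tau 0%R)%N.
Proof. have := ltn_ord (j 0); move: (nat_of_ord (j 0)) => x; by rewrite subn0 mul1n tW. Qed.

Lemma mono1 x y : s ^+ x * t ^+ y = 'X_[mnmS (fun _ => x) (fun _ => y)].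
Proof. by rewrite mpolyX_mnmS !big_ord1. Qed.

Lemma coef1 (i : sexp tau) (j : texp tau) :
  delta1@_(stmono i j) = ((j 0 : nat) == subn (tau 0).-1 (i 0))%:R.
Proof.
rewrite /delta1 /dd raddf_sum /=.
under eq_bigr => u _ do rewrite mono1 mcoeffX stmonoE mnmS_eq !forall_I1.
rewrite sum_ind_uniq; last first.
  move=> u u' /andP[_ /eqP H] /andP[_ /eqP H']; apply: val_inj.
  by rewrite /= H H'.
apply: (congr1 (fun b : bool => b%:R)); apply/idP/idP => [/existsP[u /andP[/eqP <- /eqP <-]]|/eqP E].
  have := ltn_ord u; lia.
have Hj := j0_lt j.
apply/existsP; exists (Ordinal Hj); rewrite /= E; apply/andP; split => //.
have Hi := i0_lt i; apply/eqP; set x := nat_of_ord (i 0) in Hi E *; set a := tau 0 in Hi E Hj *; lia.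
Qed.

Lemma eq_I1 (T : 'I_1 -> nat) (f g : {dffun forall k : 'I_1, 'I_(T k)}) :
  (f 0%R : nat) = g 0%R -> f = g.
Proof. move=> H; apply/ffunP => k; rewrite (ord1 k); exact: val_inj. Qed.

Lemma H2_1 (i i' : sexp tau) (j : texp tau) : i != i' ->
  delta1@_(stmono i j) * delta1@_(stmono i' j) = 0.
Proof.
move=> ne; rewrite !coef1.
case: eqP => [E|]; last by rewrite mul0r.
case: eqP => [E'|]; last by rewrite mulr0.
case/negP: ne; apply/eqP/eq_I1.
have Hi := i0_lt i; have Hi' := i0_lt i'.
move: E E'; set x := nat_of_ord (j 0); set a := tau 0.
set y := nat_of_ord (i 0) in Hi *; set y' := nat_of_ord (i' 0) in Hi' *; lia.
Qed.

Lemma H1_1 (i : sexp tau) : \sum_(j : texp tau) (delta1@_(stmono i j)) ^+ 2 = 1.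
Proof.
under eq_bigr => j _ do rewrite coef1 expr2 -natrM mulnb andbb.
rewrite sum_ind_uniq; last first.
  by move=> j j' /eqP E /eqP E'; apply: eq_I1; rewrite E E'.
have Hi := i0_lt i.
have H : forall k : 'I_1, (subn (tau 0%R).-1 (i 0%R) < (1 - k) * tau (wk k))%N.
  move=> k; rewrite (ord1 k).
  set y := nat_of_ord (i 0) in Hi *; rewrite W0 subn0 mul1n.
  set a := tau 0 in Hi *; lia.
have -> : [exists j : texp tau, (j 0%R : nat) == subn (tau 0).-1 (i 0)] = true.
  apply/existsP; exists ([ffun k => Ordinal (H k)] : texp tau).
  by rewrite ffunE.
by [].
Qed.
End C1.


Section Nat2.
Variables (a b : nat).
Definition P1 (x0 x1 y0 y1 : nat) : bool :=
  [&& (b <= x1)%N, y0 == (a.-1 - x0 + a)%N & y1 == (b.-1 - (x1 - b))%N].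
Definition P2 (x0 x1 y0 y1 : nat) : bool :=
  [&& (x1 < b)%N, y0 == (a.-1 - x0)%N & y1 == (b.-1 - x1)%N].

Lemma P12_excl (x0 x1 y0 y1 : nat) : P1 x0 x1 y0 y1 && P2 x0 x1 y0 y1 = false.
Proof. by apply/negP => /andP[/and3P[/leP ? _ _] /and3P[/ltP ? _ _]]; lia. Qed.

Lemma ex1 (x0 x1 y0 y1 : nat) : (x0 < a)%N -> (x1 < b + b)%N ->
  [exists p : 'I_a * 'I_b, ((a.-1 - p.1 == x0) && (b.-1 - p.2 + b == x1)) && ((p.1 + a == y0) && ((p.2 : nat) == y1))]%N
  = P1 x0 x1 y0 y1.
Proof.
move=> hx0 hx1; apply/existsP/idP => [[[u v]] /= /andP[/andP[/eqP h1 /eqP h2] /andP[/eqP h3 /eqP h4]]|].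
  have hu := ltn_ord u; have hv := ltn_ord v; rewrite /P1.
  by apply/and3P; split; [apply/leP|apply/eqP|apply/eqP]; lia.
case/and3P => /leP h1 /eqP h2 /eqP h3.
have hu : (a.-1 - x0 < a)%N by lia.
have hv : (b.-1 - (x1 - b) < b)%N by lia.
exists (Ordinal hu, Ordinal hv) => /=.
apply/andP; split; apply/andP; split; apply/eqP; lia.
Qed.

Lemma ex2 (x0 x1 y0 y1 : nat) : (x0 < a)%N ->
  [exists p : 'I_a * 'I_b, ((a.-1 - p.1 == x0) && (b.-1 - p.2 == x1)) && (((p.1 : nat) == y0) && ((p.2 : nat) == y1))]%N
  = P2 x0 x1 y0 y1.
Proof.
move=> hx0; apply/existsP/idP => [[[u v]] /= /andP[/andP[/eqP h1 /eqP h2] /andP[/eqP h3 /eqP h4]]|].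
  have hu := ltn_ord u; have hv := ltn_ord v; rewrite /P2.
  by apply/and3P; split; [apply/ltP|apply/eqP|apply/eqP]; lia.
case/and3P => /ltP h1 /eqP h2 /eqP h3.
have hu : (a.-1 - x0 < a)%N by lia.
have hv : (b.-1 - x1 < b)%N by lia.
exists (Ordinal hu, Ordinal hv) => /=.
apply/andP; split; apply/andP; split; apply/eqP; lia.
Qed.

Lemma uniq_x (x0 x1 x0' x1' y0 y1 : nat) : (x0 < a)%N -> (x0' < a)%N -> (x1 < b + b)%N -> (x1' < b + b)%N ->
  P1 x0 x1 y0 y1 || P2 x0 x1 y0 y1 -> P1 x0' x1' y0 y1 || P2 x0' x1' y0 y1 ->
  x0 = x0' /\ x1 = x1'.
Proof.
move=> ? ? ? ?.
by case/orP => /and3P[/leP ? /eqP ? /eqP ?] || case/orP => /and3P[/ltP ? /eqP ? /eqP ?];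
   case/orP => /and3P[/leP ? /eqP ? /eqP ?] || case/orP => /and3P[/ltP ? /eqP ? /eqP ?]; lia.
Qed.

Lemma uniq_y (x0 x1 y0 y1 y0' y1' : nat) :
  P1 x0 x1 y0 y1 || P2 x0 x1 y0 y1 -> P1 x0 x1 y0' y1' || P2 x0 x1 y0' y1' ->
  y0 = y0' /\ y1 = y1'.
Proof.
by case/orP => /and3P[/leP ? /eqP ? /eqP ?] || case/orP => /and3P[/ltP ? /eqP ? /eqP ?];
   case/orP => /and3P[/leP ? /eqP ? /eqP ?] || case/orP => /and3P[/ltP ? /eqP ? /eqP ?]; lia.
Qed.

Definition Y0 (x0 x1 : nat) := if (b <= x1)%N then (a.-1 - x0 + a)%N else (a.-1 - x0)%N.
Definition Y1 (x1 : nat) := if (b <= x1)%N then (b.-1 - (x1 - b))%N else (b.-1 - x1)%N.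

Lemma witP (x0 x1 : nat) : P1 x0 x1 (Y0 x0 x1) (Y1 x1) || P2 x0 x1 (Y0 x0 x1) (Y1 x1).
Proof.
by rewrite /P1 /P2 /Y0 /Y1; case: (leqP b x1) => h; rewrite !eqxx ?orbT.
Qed.

Lemma Ybnd (x0 x1 : nat) : (x0 < a)%N -> (x1 < b + b)%N ->
  (Y0 x0 x1 < a + a)%N /\ (Y1 x1 < b)%N.
Proof. by rewrite /Y0 /Y1 => h0 h1; case: (leqP b x1) => h /=; split; lia. Qed.
End Nat2.

Section C2.
Variables (K : fieldType) (tau n : 'I_3 -> nat).

Definition gA : 'I_3 -> nat := fun k => if k == 1 then tau k else 0%N.
Definition gB : 'I_3 -> nat := fun k => if k == 0 then tau k else 0%N.
Definition gC : 'I_3 -> nat := fun k => if k == 2 then 0%N else tau k.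
Definition tg2 (i : 'I_3) : seq (expo tau) :=
  if i == 0 then [:: expoOf tau gA] else if i == 1 then [:: expoOf tau gB]
  else [:: expoOf tau (fun _ => 0%N); expoOf tau gC].
Definition w2 (i : 'I_3) (e : expo tau) : K := \sum_(t <- tg2 i) (e == t)%:R.

Local Notation s0 := ('X_(lshift 2 0) : {mpoly K[2 + 2]}).
Local Notation s1 := ('X_(lshift 2 1) : {mpoly K[2 + 2]}).
Local Notation t0 := ('X_(rshift 2 0) : {mpoly K[2 + 2]}).
Local Notation t1 := ('X_(rshift 2 1) : {mpoly K[2 + 2]}).

Lemma gA_le k : (gA k <= tau k)%N. Proof. by rewrite /gA; case: ifP. Qed.
Lemma gB_le k : (gB k <= tau k)%N. Proof. by rewrite /gB; case: ifP. Qed.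
Lemma gC_le k : (gC k <= tau k)%N. Proof. by rewrite /gC; case: ifP. Qed.

Lemma tW0 : tau (wk 0) = tau 0. Proof. by congr tau; apply: val_inj. Qed.
Lemma tW1 : tau (wk 1) = tau 1. Proof. by congr tau; apply: val_inj. Qed.

Lemma det2m : \det (\matrix_(i, j) pK w2 i (ycolK K j)) =
  (s0 ^+ tau 0 - t0 ^+ tau 0) * (s1 ^+ tau 1 - t1 ^+ tau 1) * (t0 ^+ tau 0 * s1 ^+ tau 1 - 1).
Proof.
rewrite det3 !mxE /w2 !pK_tg /tg2 /= !big_cons !big_nil !addr0 !big_ord_recr !big_ord0 /=.
rewrite !expoOfE ?gA_le ?gB_le ?gC_le // /gA /gB /gC /ycolK /=.
have -> : widen_ord (leqnSn 1) ord_max = 0 :> 'I_2 by apply: val_inj.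
have -> : ord_max = 1 :> 'I_2 by apply: val_inj.
rewrite tW0 tW1 !expr0; ring.
Qed.

Lemma denK2 : denK K 2 = (s0 - t0) * (s1 - t1).
Proof.
rewrite /denK !big_ord_recr big_ord0 /=.
have -> : widen_ord (leqnSn 1) ord_max = 0 :> 'I_2 by apply: val_inj.
have -> : ord_max = 1 :> 'I_2 by apply: val_inj.
by rewrite mul1r.
Qed.

Lemma denK2_neq0 : denK K 2 != 0.
Proof. by rewrite denK2 mulf_neq0 // XsubX_neq0 // eq_lrshift. Qed.

Definition delta2 := dd s0 t0 (tau 0) * dd s1 t1 (tau 1) * (t0 ^+ tau 0 * s1 ^+ tau 1 - 1).

Lemma Hd2 : denK K 2 * delta2 = \det (\matrix_(i, j) pK w2 i (ycolK K j)).
Proof.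
rewrite det2m denK2 /delta2.
transitivity (((s0 - t0) * dd s0 t0 (tau 0)) * ((s1 - t1) * dd s1 t1 (tau 1)) * (t0 ^+ tau 0 * s1 ^+ tau 1 - 1)).
  by ring.
by rewrite -!ddE.
Qed.

Definition f2 (x y : nat) : 'I_2 -> nat := fun k => if k == 0 then x else y.

Lemma mono2 x0 x1 y0 y1 :
  s0 ^+ x0 * s1 ^+ x1 * (t0 ^+ y0 * t1 ^+ y1) = 'X_[mnmS (f2 x0 x1) (f2 y0 y1)].
Proof.
rewrite mpolyX_mnmS !big_ord_recr !big_ord0 /=.
have -> : widen_ord (leqnSn 1) ord_max = 0 :> 'I_2 by apply: val_inj.
have -> : ord_max = 1 :> 'I_2 by apply: val_inj.
rewrite /f2 /=; ring.
Qed.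

Lemma delta2E : delta2 = \sum_(u < tau 0) \sum_(v < tau 1)
  ('X_[mnmS (f2 ((tau 0).-1 - u) ((tau 1).-1 - v + tau 1)) (f2 (u + tau 0) v)]
   - 'X_[mnmS (f2 ((tau 0).-1 - u) ((tau 1).-1 - v)) (f2 u v)]).
Proof.
rewrite /delta2 /dd -mulrA mulr_suml; apply: eq_bigr => u _.
rewrite mulr_suml mulr_sumr; apply: eq_bigr => v _.
rewrite -!mono2 !exprD; ring.
Qed.

Lemma bi0 (i : sexp tau) : (i 0%R < tau 0%R)%N.
Proof. have := ltn_ord (i 0); move: (nat_of_ord (i 0)) => x; by rewrite tW0 mul1n. Qed.
Lemma bi1 (i : sexp tau) : (i 1%R < tau 1%R + tau 1%R)%N.
Proof. have := ltn_ord (i 1); move: (nat_of_ord (i 1)) => x; by rewrite tW1 mul2n -addnn. Qed.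
Lemma bj0 (j : texp tau) : (j 0%R < tau 0%R + tau 0%R)%N.
Proof. have := ltn_ord (j 0); move: (nat_of_ord (j 0)) => x; by rewrite tW0 subn0 mul2n -addnn. Qed.
Lemma bj1 (j : texp tau) : (j 1%R < tau 1%R)%N.
Proof. have := ltn_ord (j 1); move: (nat_of_ord (j 1)) => x; by rewrite tW1 /= mul1n. Qed.

Lemma pair_uniq (a b : nat) (p q : 'I_a * 'I_b) : (p.1 : nat) = q.1 -> (p.2 : nat) = q.2 -> p = q.
Proof. by case: p q => [u v] [u' v'] /= h1 h2; congr pair; apply: val_inj. Qed.

Lemma coef2 (i : sexp tau) (j : texp tau) :
  delta2@_(stmono i j) = (P1 (tau 0) (tau 1) (i 0) (i 1) (j 0) (j 1))%:R
                        - (P2 (tau 0) (tau 1) (i 0) (i 1) (j 0) (j 1))%:R.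
Proof.
rewrite delta2E raddf_sum.
under eq_bigr => u _ do rewrite raddf_sum.
under eq_bigr => u _ do under eq_bigr => v _ do rewrite raddfB /= !mcoeffX stmonoE !mnmS_eq !forall_I2 /f2 /=.
under eq_bigr => u _ do rewrite sumrB.
rewrite sumrB !pair_bigA /=.
rewrite !sum_ind_uniq; first last.
- move=> p q /andP[_ /andP[/eqP h1 /eqP h2]] /andP[_ /andP[/eqP h1' /eqP h2']].
  by apply: pair_uniq; lia.
- move=> p q /andP[_ /andP[/eqP h1 /eqP h2]] /andP[_ /andP[/eqP h1' /eqP h2']].
  by apply: pair_uniq; lia.
by rewrite ex1 ?ex2 ?bi0 ?bi1.
Qed.

Lemma eq_I2 (T : 'I_2 -> nat) (f g : {dffun forall k : 'I_2, 'I_(T k)}) :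
  (f 0%R : nat) = g 0%R -> (f 1%R : nat) = g 1%R -> f = g.
Proof.
move=> h0 h1; apply/ffunP => -[[|[|k]] Hk] //.
  by rewrite (_ : Ordinal Hk = 0); [exact: val_inj | exact: val_inj].
by rewrite (_ : Ordinal Hk = 1); [exact: val_inj | exact: val_inj].
Qed.

Lemma H2_2 (i i' : sexp tau) (j : texp tau) : i != i' ->
  delta2@_(stmono i j) * delta2@_(stmono i' j) = 0.
Proof.
move=> ne; rewrite !coef2.
set p1 := P1 _ _ (i 0) _ _ _; set p2 := P2 _ _ (i 0) _ _ _.
set q1 := P1 _ _ (i' 0) _ _ _; set q2 := P2 _ _ (i' 0) _ _ _.
have key : p1 || p2 -> q1 || q2 -> i = i'.
  move=> h h'; have [e0 e1] := uniq_x (bi0 i) (bi0 i') (bi1 i) (bi1 i') h h'.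
  exact: eq_I2.
case: (boolP (p1 || p2)) => h; last first.
  by move: h; rewrite negb_or => /andP[/negPf -> /negPf ->]; rewrite subrr mul0r.
case: (boolP (q1 || q2)) => h'; last first.
  by move: h'; rewrite negb_or => /andP[/negPf -> /negPf ->]; rewrite subrr mulr0.
by case/negP: ne; rewrite (key h h').
Qed.

Lemma sq_coef (i : sexp tau) (j : texp tau) :
  (delta2@_(stmono i j)) ^+ 2 = (P1 (tau 0) (tau 1) (i 0) (i 1) (j 0) (j 1)
                                 || P2 (tau 0) (tau 1) (i 0) (i 1) (j 0) (j 1))%:R.
Proof.
rewrite coef2; move: (P12_excl (tau 0) (tau 1) (i 0) (i 1) (j 0) (j 1)).
case: (P1 _ _ _ _ _ _); case: (P2 _ _ _ _ _ _) => //= _.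
- by rewrite subr0 expr1n.
- by rewrite sub0r sqrrN expr1n.
- by rewrite subrr expr0n.
Qed.

Lemma H1_2 (i : sexp tau) : \sum_(j : texp tau) (delta2@_(stmono i j)) ^+ 2 = 1.
Proof.
under eq_bigr => j _ do rewrite sq_coef.
rewrite sum_ind_uniq; last first.
  move=> j j' h h'; have [e0 e1] := uniq_y h h'; exact: eq_I2.
set yv : 'I_2 -> nat := fun k => if k == 0 then Y0 (tau 0) (tau 1) (i 0) (i 1) else Y1 (tau 1) (i 1).
have [B0 B1] := Ybnd (bi0 i) (bi1 i).
have H : forall k : 'I_2, (yv k < (2 - k) * tau (wk k))%N.
  case=> [[|[|k]] Hk] //.
    rewrite (_ : wk (Ordinal Hk) = 0); last exact: val_inj.
    move: B0; rewrite /yv /=; set y := Y0 _ _ _ _; set a := tau 0; lia.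
  rewrite (_ : wk (Ordinal Hk) = 1); last exact: val_inj.
  move: B1; rewrite /yv /=; set y := Y1 _ _; set b := tau 1; lia.
have -> : [exists j : texp tau, P1 (tau 0) (tau 1) (i 0) (i 1) (j 0) (j 1)
                              || P2 (tau 0) (tau 1) (i 0) (i 1) (j 0) (j 1)] = true.
  apply/existsP; exists ([ffun k => Ordinal (H k)] : texp tau).
  by rewrite !ffunE /yv /= witP.
by [].
Qed.
End C2.


Unset Implicit Arguments.

Theorem theorem4p3 (K : fieldType) (m : nat) (tau n : 'I_m.+1 -> nat) :
  [pchar K] =i pred0 ->
  (m.+1 <= 3)%N ->
  (forall k, 0 < tau k)%N ->
  (forall i, 0 < n i)%N ->
  (exists F, dixon_spec (@gencoef m tau n K) F) /\
  (forall F, dixon_spec (@gencoef m tau n K) F ->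
     \det (@dixon_resultant m tau n _ F) != 0).
Proof.
move=> _ hm _ _.
case: m tau n hm => [|[|[|m]]] tau n hm //.
- split; first by eexists; apply: spec0.
  move=> F HF.
  exact: (final_det (denK0_neq0 K) (Hd0 K tau) HF (@H1_0 K tau) (@H2_0 K tau)).
- split; first by exists (F1 (@gencoef 1 tau n K)); exact: spec1.
  move=> F HF.
  exact: (final_det (denK1_neq0 K) (Hd1 K tau) HF (@H1_1 K tau) (@H2_1 K tau)).
- split; first by exists (F2 (@gencoef 2 tau n K)); exact: spec2.
  move=> F HF.
  exact: (final_det (denK2_neq0 K) (Hd2 K tau) HF (@H1_2 K tau) (@H2_2 K tau)).
Qed.
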